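(* Let $(G,L,v)$ be a reachable triple, $i\in L(v)$ a color, and $D$ a nonnegative integer. Then (1) if $\deg_G(v)=2$, then $P(G,L,v,i,D)\ge \frac1{13}$; (2) if $\deg_G(v)\le1$, then $P(G,L,v,i,D)\ge\frac16$.
   Context: Colors are $[4]=\{1,2,3,4\}$. A list-coloring instance $(G,L)$ is a finite simple graph $G=(V,E)$ with $L:V\to 2^{[4]}$. For a vertex $v$, $G_v$ is $G$ with $v$ and its incident edges removed, and $G_{v,w}=(G_v)_w$. If $v$ has neighbors $v_1,\dots,v_d$ (in a fixed order), then for $k\in[d]$ and a color $j$, $L_{k,j}$ is the list assignment on $G_v$ with $L_{k,j}(v_\ell)=L(v_\ell)\setminus\{j\}$ for $\ell<k$ and $L_{k,j}(u)=L(u)$ for all other vertices $u$ (so $L_{1,j}=L$). A triple $(G,L,v)$ with $v\in V$ is reachable if $\deg_G(u)\le3$ and $|L(u)|\ge\deg_G(u)+1$ for every $u\in V$, and moreover $\deg_G(v)\le2$ and $|L(v)|\ge\deg_G(v)+2$. The procedure $P(G,L,v,i,D)$ ($i\in[4]$, $D$ an integer) is defined recursively (empty products equal $1$): (a) If $i\notin L(v)$, return $0$. Otherwise, if $D\le 0$ or $\deg_G(v)=0$, return $1/|L(v)|$. (b) If $\deg_G(v)=1$ with neighbor $v_1$: let $x=P(G_v,L,v_1,i,D-1)$. If $|L(v)|=2$, say $L(v)=\{i,j\}$, let $y=P(G_v,L,v_1,j,D-1)$ and return $\frac{1-x}{2-x-y}$. If $|L(v)|=4$, return $\frac{1-x}{3}$.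 If $|L(v)|=3$, let $j$ be the unique color in $[4]\setminus L(v)$, $y=P(G_v,L,v_1,j,D-1)$, and return $\frac{1-x}{2+y}$. (c) If $\deg_G(v)=2$: order its neighbors $v_1,v_2$ so that $\deg_G(v_1)\ge\deg_G(v_2)$ and, if $\deg_G(v_1)=\deg_G(v_2)=1$, so that $i\notin L(v_1)$ implies $i\notin L(v_2)$. Let $u_1,\dots,u_{d_1}$ be the neighbors of $v_1$ in $G_v$ (fixed order) and for $k\in[d_1]$, $w\in[4]$ let $L'_{k,w}$ be the list assignment on $G_{v,v_1}$ with $L'_{k,w}(u_\ell)=L(u_\ell)\setminus\{w\}$ for $\ell<k$ and $L'_{k,w}(u)=L(u)$ otherwise. Set $x_{k,w}=P(G_{v,v_1},L'_{k,w},u_k,w,D-1)$ for $k\in[d_1]$, $w\in L(v_1)$. For $j\in L(v)$ set $f_j=0$ if $j\notin L(v_1)$ and otherwise $f_j=\frac{\prod_{k=1}^{d_1}(1-x_{k,j})}{\sum_{w\in L(v_1)}\prod_{k=1}^{d_1}(1-x_{k,w})}$, and set $y_j=P(G_v,L_{2,j},v_2,j,D-1)$. Return $\frac{(1-f_i)(1-y_i)}{\sum_{j\in L(v)}(1-f_j)(1-y_j)}$. (d) If $\deg_G(v)=3$ with neighbors $v_1,v_2,v_3$: for $j\in L(v)$ let $x_j=P(G_v,L_{1,j},v_1,j,D-1)$, $y_j=P(G_v,L_{2,j},v_2,j,D-1)$, $z_j=P(G_v,L_{3,j},v_3,j,D-1)$, and return $\frac{(1-x_i)(1-y_i)(1-z_i)}{\sum_{j\in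 L(v)}(1-x_j)(1-y_j)(1-z_j)}$. For reachable triples, all recursive calls are again on reachable triples and case (d) never occurs. *)

(* Defs.v *)
From HB Require Import structures.
From mathcomp Require Import all_boot all_order all_algebra.
Set Implicit Arguments. Unset Strict Implicit. Unset Printing Implicit Defensive.
Import Order.TTheory GRing.Theory Num.Theory.

(* Colors [4] = {1,2,3,4} are represented by 'I_4 (color c <-> ordinal c-1).
   A finite simple graph is a finType V with a symmetric irreflexive
   relation adj; the "current graph" in the recursion is the subgraph induced
   by a vertex set S : {set V} (so G_v is S :\ v). *)

Section Proc.
Variables (V : finType) (adj : rel V).

Definition nbhd (S : {set V}) (v : V) : {set V} := [set u in S | adj v u].
Definition deg (S : {set V}) (v : V) : nat := #|nbhd S v|.

(* "a fixed order" of the neighbours: nbr S v lists the neighbours of v in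
   the graph induced by S, in some order (arbitrary, given as a parameter). *)
Definition nbr_order (nbr : {set V} -> V -> seq V) : Prop :=
  forall S v, perm_eq (nbr S v) (enum (nbhd S v)).

Definition Lrem (L : V -> {set 'I_4}) (us : seq V) (j : 'I_4) : V -> {set 'I_4} :=
  fun u => if u \in us then L u :\ j else L u.

Definition reachable (S : {set V}) (L : V -> {set 'I_4}) (v : V) : Prop :=
  [/\ forall u, u \in S -> (deg S u <= 3)%N /\ (deg S u + 1 <= #|L u|)%N,
      v \in S, (deg S v <= 2)%N & (deg S v + 2 <= #|L v|)%N].

Variable nbr : {set V} -> V -> seq V.

Local Open Scope ring_scope.

Definition otherc (A : {set 'I_4}) (d : 'I_4) : 'I_4 :=
  odflt d [pick j in A].

Definition Pstep (rec : {set V} -> (V -> {set 'I_4}) -> V -> 'I_4 -> rat)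
    (S : {set V}) (L : V -> {set 'I_4}) (v : V) (i : 'I_4) : rat :=
  let Sv := S :\ v in
  match nbr S v with
  | [:: v1] =>
      let x := rec Sv L v1 i in
      if #|L v| == 2%N then
        let j := otherc (L v :\ i) i in
        let y := rec Sv L v1 j in (1 - x) / (2 - x - y)
      else if #|L v| == 4%N then (1 - x) / 3%:R
      else if #|L v| == 3%N then
        let j := otherc (~: L v) i in
        let y := rec Sv L v1 j in (1 - x) / (2 + y)
      else 0
  | [:: a; b] =>
      let '(v1, v2) :=
        if (deg S a < deg S b)%N then (b, a)
        else if [&& deg S a == 1%N, deg S b == 1%N, i \notin L a & i \in L b]
             then (b, a) else (a, b) in
      let us := nbr Sv v1 in
      let Svv := Sv :\ v1 in
      let pr (w : 'I_4) : rat :=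
        \prod_(k < size us) (1 - rec Svv (Lrem L (take k us) w) (nth v us k) w) in
      let f (j : 'I_4) : rat :=
        if j \notin L v1 then 0 else pr j / \sum_(w in L v1) pr w in
      let y (j : 'I_4) : rat := rec Sv (Lrem L [:: v1] j) v2 j in
      (1 - f i) * (1 - y i) / \sum_(j in L v) (1 - f j) * (1 - y j)
  | [:: v1; v2; v3] =>
      let x (j : 'I_4) := rec Sv L v1 j in
      let y (j : 'I_4) := rec Sv (Lrem L [:: v1] j) v2 j in
      let z (j : 'I_4) := rec Sv (Lrem L [:: v1; v2] j) v3 j in
      (1 - x i) * (1 - y i) * (1 - z i) /
        \sum_(j in L v) (1 - x j) * (1 - y j) * (1 - z j)
  | _ => 0   (* degree 0 handled in P; degree >= 4 does not occur *)
  end.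

(* The procedure P(G,L,v,i,D), G the graph induced by S, D a natural number
   (the statement only concerns D >= 0, and every recursive call made with
   D > 0 has D-1 >= 0). *)
Fixpoint P (S : {set V}) (L : V -> {set 'I_4}) (v : V) (i : 'I_4) (D : nat)
    {struct D} : rat :=
  if i \notin L v then 0
  else match D with
       | O => 1 / #|L v|%:R
       | D'.+1 =>
           if deg S v == 0%N then 1 / #|L v|%:R
           else Pstep (fun S' L' v' i' => P S' L' v' i' D') S L v i
       end.

End Proc.

(* Main.v *)
Require Import Defs.
From HB Require Import structures.
From mathcomp Require Import all_boot all_order all_algebra.
From mathcomp Require Import ring lra zify.
Import Order.TTheory GRing.Theory Num.Theory.
Local Open Scope ring_scope.

Lemma c34 (n : nat) : (n <= 2)%N -> 3/4 <= (1/2:rat)^+n *+ n.+1.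
Proof. move=> h; have : (n = 0 \/ n = 1 \/ n = 2)%N by lia.
case=> [->|[->|->]]; rewrite -mulr_natr ?expr0 ?expr1 ?expr2; lra. Qed.
Lemma inv_b (n : nat) : (2 <= n <= 4)%N -> 1/4 <= 1/(n%:R : rat) <= 1/2.
Proof. move=> h; have : (n = 2 \/ n = 3 \/ n = 4)%N by lia.
case=> [->|[->|->]]; lra. Qed.
Lemma pc (n : nat) : (1/2)^+n = \prod_(k < n) (1/2 : rat).
Proof. by rewrite prodr_const card_ord. Qed.
Lemma sc (f : 'I_4 -> rat) : \sum_j f j = 1 -> \sum_j (1 - f j) = 3.
Proof. move=> h. rewrite sumrB h sumr_const card_ord. by apply/eqP. Qed.
Lemma card_le4 (A : {set 'I_4}) : (#|A| <= 4)%N.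
Proof. by have := max_card A; rewrite card_ord. Qed.

Lemma cardD1_ge (T : finType) (A : {set T}) (j : T) n : (n.+1 <= #|A|)%N -> (n <= #|A :\ j|)%N.
Proof. rewrite (cardsD1 j A); case: (j \in A) => /=; lia. Qed.

Lemma final (f y : 'I_4 -> rat) (Lv : {set 'I_4}) i : Lv = setT ->
  (forall j, 0 <= f j <= 1) -> (forall j, 0 <= y j <= 1/2) ->
  \sum_j f j = 1 -> f i <= 4/7 ->
  1/13%:R <= (1 - f i) * (1 - y i) / \sum_(j in Lv) (1 - f j) * (1 - y j) <= 1/2.
Proof.
move=> -> hf hy hs hfi.
have e: \sum_(j in [set: 'I_4]) (1 - f j) * (1 - y j) = \sum_j (1 - f j)*(1 - y j).
  by apply: eq_bigl => j; rewrite inE.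
rewrite e (bigD1 i isT) /=.
have F3 : \sum_(j | j != i) (1 - f j) = 2 + f i.
  have := sc _ hs; rewrite (bigD1 i isT) /=; lra.
have hR1 : \sum_(j | j != i) (1 - f j) / 2 <= \sum_(j | j != i) (1 - f j) * (1 - y j).
  by apply: ler_sum => j _; have := hf j; have := hy j; nra.
have hR2 : \sum_(j | j != i) (1 - f j) * (1 - y j) <= \sum_(j | j != i) (1 - f j).
  by apply: ler_sum => j _; have := hf j; have := hy j; nra.
rewrite -mulr_suml F3 in hR1; rewrite F3 in hR2.
move: hR1 hR2; set R := \sum_(j | j != i) _ => hR1 hR2.
have hA : (1 - f i) / 2 <= (1 - f i) * (1 - y i) <= 1 - f i.
  by have := hf i; have := hy i; nra.
move: hA; set A := (1 - f i) * (1 - y i) => hA.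
clearbody A R.
have := hf i => hfi'.
have pos : 0 < A + R by lra.
apply/andP; split.
- rewrite ler_pdivlMr; [lra|exact: pos].
- rewrite ler_pdivrMr; [lra|exact: pos].
Qed.

Section Pf.
Variables (V : finType) (adj : rel V).
Hypothesis adj_sym : symmetric adj.
Hypothesis adj_irr : irreflexive adj.
Variable nbr : {set V} -> V -> seq V.
Hypothesis Hnbr : nbr_order adj nbr.

Implicit Types (S : {set V}) (L : V -> {set 'I_4}) (v u : V) (i j w : 'I_4) (k : nat).
Local Notation deg := (deg adj).
Local Notation nbhd := (nbhd adj).
Local Notation reachable := (reachable adj).

Lemma in_nbhd S v u : (u \in nbhd S v) = (u \in S) && adj v u.
Proof. by rewrite inE. Qed.

Lemma deg_D1 S v u : (deg (S :\ v) u <= deg S u)%N.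
Proof.
apply: subset_leq_card; apply/subsetP=> x; rewrite !in_nbhd inE.
by case/andP=> /andP[_ ->] ->.
Qed.

Lemma deg_del S v u : v \in S -> adj u v -> (deg (S :\ v) u).+1 = deg S u.
Proof.
move=> vS uv. rewrite /Defs.deg (cardsD1 v (nbhd S u)) in_nbhd vS uv /=.
congr (_.+1); apply: eq_card => x; rewrite !inE.
by rewrite andbA.
Qed.
Arguments deg_del {S v u}.


Lemma nbr_mem S v u : (u \in nbr S v) = (u \in nbhd S v).
Proof. by rewrite (perm_mem (Hnbr S v)) mem_enum. Qed.
Lemma nbr_uniq S v : uniq (nbr S v).
Proof. by rewrite (perm_uniq (Hnbr S v)) enum_uniq. Qed.
Lemma nbr_size S v : size (nbr S v) = deg S v.
Proof. by rewrite (perm_size (Hnbr S v)) -cardE. Qed.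

Lemma reach_del S L v v1 : reachable S L v -> v1 \in nbhd S v ->
  reachable (S :\ v) L v1.
Proof.
case=> hall vS dv Lv; rewrite in_nbhd => /andP[v1S av1].
have v1v : v1 != v by apply: contraTneq av1 => ->; rewrite adj_irr.
have hd : (deg (S :\ v) v1).+1 = deg S v1 by apply: deg_del => //; rewrite adj_sym.
have [d1 L1] := hall v1 v1S.
split.
- move=> u; rewrite inE => /andP[_ uS]; have [h1 h2] := hall u uS.
  have := deg_D1 S v u; lia.
- by apply/setD1P.
- lia.
- lia.
Qed.
Arguments reach_del {S L v v1}.


Lemma reach_y S L v v1 v2 j : reachable S L v -> v1 \in nbhd S v ->
  v2 \in nbhd S v -> v1 != v2 -> reachable (S :\ v) (Lrem L [:: v1] j) v2.
Proof.
move=> hr h1 h2 h12.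
have [hall1 _ _ _] := reach_del hr h1.
have [_ v2S d2 L2] := reach_del hr h2.
have [hall vS _ _] := hr.
move: h1; rewrite in_nbhd => /andP[v1S av1].
have hd : (deg (S :\ v) v1).+1 = deg S v1 by apply: deg_del => //; rewrite adj_sym.
split => //.
- move=> u uS; have [h3 h4] := hall1 u uS; split => //.
  rewrite /Lrem mem_seq1; case: eqP => // ->.
  have [_ h5] := hall v1 v1S.
  apply: cardD1_ge; lia.
- by rewrite /Lrem mem_seq1 eq_sym (negbTE h12).
Qed.
Arguments reach_y {S L v v1 v2}.


Lemma reach_x S L v v1 k w : reachable S L v -> v1 \in nbhd S v ->
  (k < size (nbr (S :\ v) v1))%N ->
  reachable (S :\ v :\ v1) (Lrem L (take k (nbr (S :\ v) v1)) w)
            (nth v (nbr (S :\ v) v1) k).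
Proof.
move=> hr h1 hk.
have [hall vS _ _] := hr.
have r1 := reach_del hr h1.
have [hall1 v1S' _ _] := r1.
set us := nbr (S :\ v) v1 in hk *.
set u0 := nth v us k.
have u0us : u0 \in us by exact: mem_nth.
have u0n : u0 \in nbhd (S :\ v) v1 by rewrite -nbr_mem.
move: (u0n); rewrite in_nbhd => /andP[u0S' a0].
have u0v1 : u0 != v1 by apply: contraTneq a0 => ->; rewrite adj_irr.
have u0nt : u0 \notin take k us.
  have ud : u0 \in drop k us.
    have -> : u0 = nth v (drop k us) 0 by rewrite nth_drop addn0.
    by apply: mem_nth; rewrite size_drop subn_gt0.
  move: (nbr_uniq (S :\ v) v1); rewrite -/us -{1}(cat_take_drop k us) cat_uniq.
  by case/and3P=> _ /hasPn h _; exact: h _ ud.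
have hdel : forall u, u \in us -> (deg (S :\ v :\ v1) u).+1 = deg (S :\ v) u.
  move=> u; rewrite nbr_mem in_nbhd => /andP[_ au].
  by apply: deg_del => //; rewrite adj_sym.
have uS : forall u, u \in S :\ v -> u \in S by move=> u; rewrite inE => /andP[].
split.
- move=> u; rewrite inE => /andP[_ uS'].
  have [h1' h2'] := hall u (uS u uS').
  have e1 := deg_D1 (S :\ v) v1 u; have e2 := deg_D1 S v u.
  split; first by move: h1' e1 e2; clear; lia.
  rewrite /Lrem; case: ifP => ut; last by move: h2' e1 e2; clear; lia.
  have e3 := hdel u (mem_take ut).
  apply: cardD1_ge; move: h2' e1 e2 e3; clear; lia.
- by apply/setD1P.
- have := hdel u0 u0us; have [h3 _] := hall u0 (uS u0 u0S').
  have := deg_D1 S v u0; move: h3; clear; lia.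
- rewrite /Lrem (negbTE u0nt).
  have := hdel u0 u0us; have [_ h3] := hall u0 (uS u0 u0S').
  have := deg_D1 S v u0; move: h3; clear; lia.
Qed.
Arguments reach_x {S L v v1 k} w.


Definition recOK (rec : {set V} -> (V -> {set 'I_4}) -> V -> 'I_4 -> rat) :=
  forall S L v i, reachable S L v -> 0 <= rec S L v i <= 1/2.

Lemma Pstep1 rec S L v i : recOK rec -> reachable S L v -> deg S v = 1%N ->
  1/6%:R <= Pstep adj nbr rec S L v i <= 1/2.
Proof.
move=> IH hr d1. have hs := nbr_size S v. rewrite d1 in hs.
have [_ _ _ Lv] := hr.
rewrite /Pstep. case E: (nbr S v) hs => [|v1 [|? ?]] hs; try discriminate hs.
rewrite /=.
have v1n : v1 \in nbhd S v by rewrite -nbr_mem E mem_seq1.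
have r1 := reach_del hr v1n.
have hx := IH _ _ _ i r1.
have : #|L v| = 3%N \/ #|L v| = 4%N by have := card_le4 (L v); lia.
case=> -> /=.
- have hy := IH _ _ _ (otherc (~: L v) i) r1.
  have pos : 0 < 2 + rec (S :\ v) L v1 (otherc (~: L v) i) by lra.
  apply/andP; split; [rewrite ler_pdivlMr; [lra|exact: pos] | rewrite ler_pdivrMr; [lra|exact: pos]].
- lra.
Qed.
Arguments Pstep1 {rec S L v} i.


Definition prw rec S L v v1 (w : 'I_4) : rat :=
  \prod_(k < size (nbr (S :\ v) v1))
     (1 - rec (S :\ v :\ v1) (Lrem L (take k (nbr (S :\ v) v1)) w)
              (nth v (nbr (S :\ v) v1) k) w).
Definition fw rec S L v v1 (j : 'I_4) : rat :=
  if j \notin L v1 then 0 else prw rec S L v v1 j / \sum_(w in L v1) prw rec S L v v1 w.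
Definition yw (rec : {set V} -> (V -> {set 'I_4}) -> V -> 'I_4 -> rat) S L v v1 v2 (j : 'I_4) : rat :=
  rec (S :\ v) (Lrem L [:: v1] j) v2 j.

Lemma key rec S L v i v1 v2 : recOK rec -> reachable S L v -> deg S v = 2%N ->
  v1 \in nbhd S v -> v2 \in nbhd S v -> v1 != v2 ->
  1/13%:R <= (1 - fw rec S L v v1 i) * (1 - yw rec S L v v1 v2 i) /
     \sum_(j in L v) (1 - fw rec S L v v1 j) * (1 - yw rec S L v v1 v2 j) <= 1/2.
Proof.
move=> IH hr d2 h1 h2 h12.
have [_ vS _ Lv] := hr.
have r1 := reach_del hr h1.
have [_ _ dv1 Lv1] := r1.
have hd : (size (nbr (S :\ v) v1) <= 2)%N by rewrite nbr_size.
have Lvs : L v = setT.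
  apply/eqP; rewrite eqEcard subsetT cardsT card_ord; lia.
have prlo : forall w, (1/2)^+ size (nbr (S :\ v) v1) <= prw rec S L v v1 w.
  move=> w; rewrite pc /prw; apply: ler_prod => k _.
  have := IH _ _ _ w (reach_x w hr h1 (ltn_ord k)); lra.
have prhi : forall w, prw rec S L v v1 w <= 1.
  move=> w; apply: le_trans (_ : _ <= \prod_(k < size (nbr (S :\ v) v1)) (1:rat)) _; last by rewrite big1.
  apply: ler_prod => k _.
  have := IH _ _ _ w (reach_x w hr h1 (ltn_ord k)); lra.
have prpos : forall w, 0 < prw rec S L v v1 w.
  by move=> w; apply: lt_le_trans (prlo w); apply: exprn_gt0; lra.
have hy : forall j, 0 <= yw rec S L v v1 v2 j <= 1/2.
  by move=> j; apply: IH; apply: reach_y.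
have hf : forall j, 0 <= fw rec S L v v1 j <= 1.
  move=> j; rewrite /fw; case: ifP => [_|/negbFE jL]; first lra.
  rewrite (bigD1 j jL) /=.
  have hr0 : 0 <= \sum_(w | (w \in L v1) && (w != j)) prw rec S L v v1 w.
    by apply: sumr_ge0 => w _; exact: ltW (prpos w).
  move: hr0; set R := \sum_(w | _) _ => hr0.
  have := prpos j; move: (prw rec S L v v1 j) => p hp.
  have pos: 0 < p + R by lra.
  apply/andP; split; [apply: divr_ge0; lra | rewrite ler_pdivrMr; [lra|exact: pos]].
have hs : \sum_j fw rec S L v v1 j = 1.
  have /card_gt0P [w0 w0L] : (0 < #|L v1|)%N by lia.
  have Tpos : 0 < \sum_(w in L v1) prw rec S L v v1 w.
    rewrite (bigD1 w0 w0L) /=; have := prpos w0.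
    have : 0 <= \sum_(w | (w \in L v1) && (w != w0)) prw rec S L v v1 w.
      by apply: sumr_ge0 => w _; exact: ltW (prpos w).
    lra.
  rewrite /fw; under eq_bigr do rewrite if_neg.
  rewrite -big_mkcond /= -mulr_suml mulfV; [done | exact: lt0r_neq0 Tpos].
have hfi : fw rec S L v v1 i <= 4/7.
  rewrite /fw; case: ifP => [_|/negbFE iL]; first lra.
  rewrite (bigD1 i iL) /=.
  have -> : \sum_(w | (w \in L v1) && (w != i)) prw rec S L v v1 w
          = \sum_(w in L v1 :\ i) prw rec S L v v1 w.
    by apply: eq_bigl => w; rewrite in_setD1 andbC.
  have hrest : (1/2 : rat)^+ size (nbr (S :\ v) v1) *+ #|L v1 :\ i|
               <= \sum_(w in L v1 :\ i) prw rec S L v v1 w.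
    by rewrite -sumr_const; apply: ler_sum => w _; exact: prlo.
  have hc : ((size (nbr (S :\ v) v1)).+1 <= #|L v1 :\ i|)%N.
    by apply: cardD1_ge; rewrite nbr_size; move: Lv1; clear; lia.
  have c3 := c34 _ hd.
  have hmono : (1/2 : rat)^+ size (nbr (S :\ v) v1) *+ (size (nbr (S :\ v) v1)).+1
             <= (1/2 : rat)^+ size (nbr (S :\ v) v1) *+ #|L v1 :\ i|.
    apply: ler_wpMn2l; first by apply: exprn_ge0; lra.
    exact: hc.
  have := prhi i; have := prpos i.
  move: (\sum_(w in L v1 :\ i) _) hrest => R hR.
  move: (prw rec S L v v1 i) => p hp hp1.
  have pos : 0 < p + R by lra.
  rewrite ler_pdivrMr; [lra|exact: pos].
exact: (final (fw rec S L v v1) (yw rec S L v v1 v2) (L v) i Lvs hf hy hs hfi).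
Qed.

Lemma Pstep2 rec S L v i : recOK rec -> reachable S L v -> deg S v = 2%N ->
  1/13%:R <= Pstep adj nbr rec S L v i <= 1/2.
Proof.
move=> IH hr d2. have hs := nbr_size S v. rewrite d2 in hs.
rewrite /Pstep. case E: (nbr S v) hs => [|a [|b [|? ?]]] hs; try discriminate hs.
rewrite /=.
have ha : a \in nbhd S v by rewrite -nbr_mem E !inE eqxx.
have hb : b \in nbhd S v by rewrite -nbr_mem E !inE eqxx orbT.
have hab : a != b.
  by have := nbr_uniq S v; rewrite E /= inE andbT.
have hba : b != a by rewrite eq_sym.
case: ifP => _; [|case: ifP => _].
- exact (key rec S L v i b a IH hr d2 hb ha hba).
- exact (key rec S L v i b a IH hr d2 hb ha hba).
- exact (key rec S L v i a b IH hr d2 ha hb hab).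
Qed.
Arguments Pstep2 {rec S L v} i.


Lemma main D : forall S L v i, reachable S L v ->
  (0 <= P adj nbr S L v i D <= 1/2) /\
  (i \in L v -> (deg S v = 2%N -> 1/13%:R <= P adj nbr S L v i D) /\
                ((deg S v <= 1)%N -> 1/6%:R <= P adj nbr S L v i D)).
Proof.
elim: D => [|D IH] S L v i hr; have [_ vS dv Lv] := hr; have L4 := card_le4 (L v).
- rewrite /=; case iL: (i \in L v) => /=; last by split; [lra | move=> hF; discriminate hF].
  have hb : (2 <= #|L v| <= 4)%N by apply/andP; split; lia.
  have := inv_b _ hb => hh.
  split; [lra | split=> _; lra].
- have -> : P adj nbr S L v i D.+1 = if i \notin L v then 0 else
     if deg S v == 0%N then 1 / #|L v|%:R
     else Pstep adj nbr (fun S' L' v' i' => P adj nbr S' L' v' i' D) S L v i by [].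
  case iL: (i \in L v) => /=; last by split; [lra | move=> hF; discriminate hF].
  have rok : recOK (fun S' L' v' i' => P adj nbr S' L' v' i' D).
    by move=> S' L' v' i' hr'; exact: (IH S' L' v' i' hr').1.
  case: eqP => d0.
  + have hb : (2 <= #|L v| <= 4)%N by apply/andP; split; lia.
    have := inv_b _ hb => hh.
    split; [lra | split=> h; [exfalso; move: h d0; clear; lia | lra]].
  + have : deg S v = 1%N \/ deg S v = 2%N by lia.
    case=> dd.
    * have := Pstep1 i rok hr dd => hh.
      split; [lra | split=> h; [exfalso; move: h dd; clear; lia | lra]].
    * have := Pstep2 i rok hr dd => hh.
      split; [lra | split=> h; [lra | exfalso; move: h dd; clear; lia]].
Qed.
End Pf.

Theorem proposition8 (V : finType) (adj : rel V)
    (adj_sym : symmetric adj) (adj_irr : irreflexive adj)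
    (nbr : {set V} -> V -> seq V) (Hnbr : nbr_order adj nbr)
    (L : V -> {set 'I_4}) (v : V) (i : 'I_4) (D : nat) :
  reachable adj [set: V] L v -> i \in L v ->
  (deg adj [set: V] v = 2%N -> 1 / 13%:R <= P adj nbr [set: V] L v i D) /\
  ((deg adj [set: V] v <= 1)%N -> 1 / 6%:R <= P adj nbr [set: V] L v i D).
Proof.
move=> hr iL.
have [_ h] := main V adj adj_sym adj_irr nbr Hnbr D [set: V] L v i hr.
exact: h iL.
Qed.
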